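(* Let $(P,h)$ be a poset endowed with a height function $h$, and let $H$ be the maximal value of $h$. The generating series $\mathscr{Z}_{P,h} = \sum_{n \geq 0} \mathsf{Z}_{P,h}([n+1]_q)\, t^n$ can be expressed as a rational fraction: \begin{equation} \mathscr{Z}_{P,h} = \frac{\mathcal{H}_{P,h}(q,t)}{(1- t)(1-q t)\dots(1-q^{H} t)}, \end{equation} where $\mathcal{H}_{P,h}$ is a polynomial in $q, q^{-1}$ and $t$ with integer coefficients. The degree of $\mathcal{H}_{P,h}$ with respect to $t$ is at most $H$.
   Context: $P$ is a finite poset and $h : P \to \mathbb{N}$ is a height function, i.e. $h(x) < h(y)$ for every cover relation $x < y$ in $P$. We write $[n]_q = (q^n-1)/(q-1)$. The $q$-Zeta polynomial $\mathsf{Z}_{P,h}(x) \in \mathbb{Q}(q)[x]$ is the unique polynomial such that for every integer $n \geq 2$, $\mathsf{Z}_{P,h}([n]_q) = \sum_{e_1 \leq \dots \leq e_{n-1}} q^{\sum_j h(e_j)}$, the sum running over all (weak) multichains $e_1 \leq \dots \leq e_{n-1}$ of elements of $P$; its degree is $H$, and its value at $[1]_q=1$ is the Euler characteristic of the order complex of $P$. The polynomial $\mathcal{H}_{P,h}$ is defined as the numerator appearing in this statement. *)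

(* Defs.v *)
From HB Require Import structures.
From mathcomp Require Import all_boot all_order all_algebra.
Set Implicit Arguments. Unset Strict Implicit. Unset Printing Implicit Defensive.
Import Order.TTheory GRing.Theory Num.Theory.
Local Open Scope ring_scope.

Definition Qq : fieldType := {fraction {poly int}}.
Definition qvar : Qq := tofrac ('X : {poly int}).
Definition qnum (n : nat) : Qq := (qvar ^+ n - 1) / (qvar - 1).

Section Poset.
Context {d : Order.disp_t} {T : finPOrderType d}.

Definition is_cover (x y : T) : bool :=
  (x < y)%O && [forall z : T, ~~ ((x < z)%O && (z < y)%O)].

Definition height_fun (h : T -> nat) : Prop :=
  forall x y : T, is_cover x y -> (h x < h y)%N.

Definition maxh (h : T -> nat) : nat := \max_(x : T) h x.

Definition multichain_sum (h : T -> nat) (m : nat) : Qq :=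
  \sum_(e : {ffun 'I_m -> T} |
          [forall i : 'I_m, forall j : 'I_m, (i <= j)%N ==> (e i <= e j)%O])
     qvar ^+ (\sum_(j < m) h (e j)).

Definition is_qZeta (h : T -> nat) (Z : {poly Qq}) : Prop :=
  forall n : nat, (2 <= n)%N -> Z.[qnum n] = multichain_sum h n.-1.
End Poset.

Definition qdenom (H : nat) : {poly Qq} := \prod_(i < H.+1) (1 - qvar ^+ i *: 'X).

(* The Laurent polynomial q^{-a} * Hp(q,t), Hp in Z[q][t], viewed in Q(q)[t] *)
Definition laurent_poly (a : nat) (Hp : {poly {poly int}}) : {poly Qq} :=
  map_poly (fun c : {poly int} => tofrac c / qvar ^+ a) Hp.

(* Equality of formal power series in Q(q)[[t]]:
   sum_n s n t^n = N / D, i.e. D * (sum_n s n t^n) = N coefficientwise. *)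
Definition series_eq_frac (s : nat -> Qq) (N D : {poly Qq}) : Prop :=
  forall k : nat, (D * \poly_(n < k.+1) s n)`_k = N`_k.

(* Main.v *)
Require Import Defs.
From HB Require Import structures.
From mathcomp Require Import all_boot all_order all_algebra.
From mathcomp Require Import ring zify.
Set Implicit Arguments. Unset Strict Implicit. Unset Printing Implicit Defensive.
Import Order.TTheory GRing.Theory Num.Theory.
Local Open Scope ring_scope.

Lemma qvarX n : qvar ^+ n = tofrac ('X^n : {poly int}).
Proof. by rewrite /qvar rmorphXn. Qed.

Lemma qvar1_neq0 : qvar - 1 != 0.
Proof.
rewrite /qvar -(rmorph1 (@tofrac _)) -rmorphB /= tofrac_eq0 subr_eq0.
by apply/eqP => /(congr1 (size : {poly int} -> nat)); rewrite size_polyX size_poly1.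
Qed.

Lemma qvarXn_neq0 n : qvar ^+ n != 0.
Proof. by rewrite qvarX tofrac_eq0 monic_neq0 ?monicXn. Qed.

Lemma qnumD n j : qnum (n + j) = qvar ^+ j * qnum n + qnum j.
Proof.
rewrite /qnum mulrA -mulrDl exprD; congr (_ / _); ring.
Qed.

Lemma qnum_inj : injective qnum.
Proof.
move=> n m; rewrite /qnum => /(mulIf (invr_neq0 qvar1_neq0)) /addIr.
rewrite !qvarX => /eqP; rewrite tofrac_eq => /eqP /(congr1 (size : {poly int} -> nat)).
by rewrite !size_polyXn => -[].
Qed.
Definition conv (p : {poly Qq}) (a : nat -> Qq) (k : nat) : Qq :=
  \sum_(i < k.+1) p`_i * a (k - i)%N.

Lemma conv_trunc p a k n : (k < n)%N -> conv p a k = (p * \poly_(i < n) a i)`_k.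
Proof.
move=> kn; rewrite coefM; apply: eq_bigr => i _; rewrite coef_poly.
by rewrite (leq_ltn_trans (leq_subr _ _) kn).
Qed.

Lemma series_convE s N D : series_eq_frac s N D <-> forall k, conv D s k = N`_k.
Proof. by split=> H k; rewrite -H (conv_trunc _ _ (ltnSn k)). Qed.

Lemma convM r p a k : conv (r * p) a k = conv r (conv p a) k.
Proof.
rewrite (conv_trunc _ _ (ltnSn k)) -mulrA coefM; apply: eq_bigr => i _.
by rewrite (conv_trunc _ _ (_ : k - i < k.+1)%N) // ltnS leq_subr.
Qed.

Lemma conv_lin1 c a k :
  conv (1 - c *: 'X) a k.+1 = a k.+1 - c * a k.
Proof.
rewrite (conv_trunc _ _ (ltnSn k.+1)) mulrBl mul1r -scalerAl coefB coefZ coefXM /=.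
by rewrite !coef_poly !ltnS leqnn ltnW.
Qed.

Lemma conv_lin0 c a : conv (1 - c *: 'X) a 0 = a 0.
Proof.
by rewrite /conv big_ord1 subn0 coefB coefZ coefX coef1 /= mulr0 subr0 mul1r.
Qed.

Lemma conv_small (p : {poly Qq}) (a : nat -> Qq) k n : (size p <= n)%N -> (n <= k.+1)%N ->
  conv p a k = \sum_(i < n) p`_i * a (k - i)%N.
Proof.
move=> sp nk; rewrite /conv (big_ord_widen _ (fun i => p`_i * a (k - i)%N) nk).
rewrite [LHS](bigID (fun i : 'I_k.+1 => (i < n)%N)) /= addrC big1 ?add0r //.
by move=> i; rewrite -leqNgt => ni; rewrite nth_default ?mul0r // (leq_trans sp).
Qed.

Lemma conv_vanish (p : {poly Qq}) (b : nat -> Qq) g dd k : (size p <= g.+1)%N ->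
  (forall j, (dd < j)%N -> b j = 0) -> (g + dd < k)%N -> conv p b k = 0.
Proof.
move=> sp hb gk; apply: big1 => i _.
have [ig|gi] := leqP (i : nat) g.
  by rewrite hb ?mulr0 //; have := ltn_ord i; lia.
by rewrite nth_default ?mul0r // (leq_trans sp).
Qed.

Lemma size_prod_lin (r : seq nat) (f : nat -> Qq) :
  (size (\prod_(c <- r) (1 - f c *: 'X : {poly Qq}))%R <= (size r).+1)%N.
Proof.
elim: r => [|c r IH]; first by rewrite big_nil size_poly1.
rewrite big_cons /=; apply: (leq_trans (size_mul_leq _ _)).
have h2 : (size (1 - f c *: ('X : {poly Qq}))%R <= 2)%N.
  apply: (leq_trans (size_polyD _ _)); rewrite geq_max size_poly1 /=.
  by rewrite size_polyN (leq_trans (size_scale_leq _ _)) // size_polyX.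
rewrite -subn1 leq_subLR; apply: (leq_trans (leq_add h2 IH)); lia.
Qed.
Section MC.
Context {d : Order.disp_t} {T : finPOrderType d} (h : T -> nat).

Definition mono m (e : {ffun 'I_m -> T}) : bool :=
  [forall i : 'I_m, forall j : 'I_m, (i <= j)%N ==> (e i <= e j)%O].

Definition mcP m (P : pred T) : Qq :=
  \sum_(e : {ffun 'I_m -> T} | mono e && [forall i, P (e i)])
     qvar ^+ (\sum_(j < m) h (e j)).

Definition W m (x : T) : Qq := mcP m (fun z => (x <= z)%O).

Lemma mcP_T m : multichain_sum h m = mcP m predT.
Proof.
apply: eq_bigl => e; rewrite /mono; have -> : [forall i, predT (e i)] by apply/forallP. by rewrite andbT.
Qed.

Lemma mcP0 P : mcP 0 P = 1.
Proof.
rewrite /mcP (eq_bigl predT) => [|e]; last first.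
  by apply/andP; split; apply/forallP => -[].
rewrite (eq_bigr (fun _ => 1)) => [|e _]; last by rewrite big_ord0 expr0.
by rewrite sumr_const card_ffun card_ord expn0.
Qed.

Definition fcons m (x : T) (g : {ffun 'I_m -> T}) : {ffun 'I_m.+1 -> T} :=
  [ffun i => if unlift ord0 i is Some j then g j else x].

Lemma fcons0 m x (g : {ffun 'I_m -> T}) : fcons x g ord0 = x.
Proof. by rewrite ffunE unlift_none. Qed.

Lemma fconsS m x (g : {ffun 'I_m -> T}) j : fcons x g (lift ord0 j) = g j.
Proof. by rewrite ffunE liftK. Qed.

Definition fcons_p m (p : T * {ffun 'I_m -> T}) := fcons p.1 p.2.
Definition fdecons m (f : {ffun 'I_m.+1 -> T}) : T * {ffun 'I_m -> T} :=
  (f ord0, [ffun j => f (lift ord0 j)]).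

Lemma fcons_bij m : bijective (@fcons_p m).
Proof.
exists (@fdecons m).
  case=> x g; rewrite /fdecons /fcons_p /= fcons0; congr pair.
  by apply/ffunP => j; rewrite ffunE fconsS.
move=> f; apply/ffunP => i; rewrite /fcons_p /fdecons /= ffunE.
by case: unliftP => [j ->|->]; rewrite ?ffunE.
Qed.

Lemma fcons_cond m (P : pred T) x (g : {ffun 'I_m -> T}) :
  (forall y z, P y -> (y <= z)%O -> P z) ->
  (mono (fcons x g) && [forall i, P (fcons x g i)]) =
  (P x && (mono g && [forall i, (x <= g i)%O])).
Proof.
move=> Pup; apply/idP/idP.
  case/andP => /forallP mo /forallP Pa; rewrite -(fcons0 x g) Pa /=.
  apply/andP; split; apply/forallP => i.
    apply/forallP => j; apply/implyP => ij.
    have := mo (lift ord0 i) => /forallP /(_ (lift ord0 j)).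
    by rewrite !fconsS /= /bump !add1n ltnS ij.
  have := mo ord0 => /forallP /(_ (lift ord0 i)).
  by rewrite fconsS fcons0.
case/and3P => Px /forallP mo /forallP xg; apply/andP; split; last first.
  by apply/forallP => i; rewrite ffunE; case: unliftP => [j _|_] //; apply: Pup Px (xg j).
apply/forallP => i; apply/forallP => j; apply/implyP => ij.
rewrite !ffunE; case: (unliftP ord0 i) => [i' ei|ei]; case: (unliftP ord0 j) => [j' ej|ej] //.
- by move: ij; rewrite ei ej /= /bump !add1n ltnS => ij; have := mo i' => /forallP /(_ j'); rewrite ij.
- by move: ij; rewrite ei ej /= /bump add1n.
Qed.

Lemma mcP_S m (P : pred T) : (forall y z, P y -> (y <= z)%O -> P z) ->
  mcP m.+1 P = \sum_(x | P x) qvar ^+ h x * W m x.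
Proof.
move=> Pup; rewrite /mcP (reindex (@fcons_p m)); last exact: onW_bij (fcons_bij m).
transitivity (\sum_(x | P x) \sum_(g : {ffun 'I_m -> T} | mono g && [forall i, (x <= g i)%O])
   qvar ^+ h x * qvar ^+ (\sum_(j < m) h (g j))).
  rewrite pair_big_dep; apply: eq_big => [[x g]|[x g] _]; first by rewrite /fcons_p /= fcons_cond.
  rewrite /fcons_p /= big_ord_recl fcons0 exprD.
  by congr (_ * qvar ^+ _); apply: eq_bigr => j _; rewrite fconsS.
by apply: eq_bigr => x _; rewrite /W /mcP mulr_sumr.
Qed.

Lemma W0 x : W 0 x = 1.
Proof. exact: mcP0. Qed.

Lemma WS m x : W m.+1 x = \sum_(z | (x <= z)%O) qvar ^+ h z * W m z.
Proof. by rewrite /W mcP_S // => y z; apply: le_trans. Qed.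

Lemma multichainS m : multichain_sum h m.+1 = \sum_x qvar ^+ h x * W m x.
Proof. by rewrite mcP_T mcP_S. Qed.


Hypothesis hh : height_fun h.
Let H := maxh h.

Lemma h_le_H x : (h x <= H)%N.
Proof. by rewrite /H /maxh; apply: (leq_bigmax_cond x). Qed.

Lemma h_strict x z : (x < z)%O -> (h x < h z)%N.
Proof.
move=> xz.
suff: forall n (x z : T), (#|[set w | (x < w)%O && (w < z)%O]| < n)%N -> (x < z)%O -> (h x < h z)%N.
  by move/(_ _ x z (ltnSn _)); apply.
elim=> [//|n IH] {}x {}z cn {}xz.
have [cov|ncov] := boolP (is_cover x z); first exact: hh.
move: ncov; rewrite /is_cover xz /= => /forallPn [w]; rewrite negbK => /andP [xw wz].
have sub1 : [set v | (x < v)%O && (v < w)%O] \proper [set v | (x < v)%O && (v < z)%O].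
  apply/properP; split.
    by apply/subsetP => v; rewrite !inE => /andP [-> vw] /=; apply: lt_trans vw wz.
  by exists w; rewrite !inE ?xw ?wz ?ltxx // andbF.
have sub2 : [set v | (w < v)%O && (v < z)%O] \proper [set v | (x < v)%O && (v < z)%O].
  apply/properP; split.
    by apply/subsetP => v; rewrite !inE => /andP [wv ->]; rewrite andbT; apply: lt_trans xw wv.
  by exists w; rewrite !inE ?xw ?wz ?ltxx.
apply: (@ltn_trans (h w)); apply: IH => //.
  by apply: leq_trans (proper_card sub1) _; rewrite -ltnS.
by apply: leq_trans (proper_card sub2) _; rewrite -ltnS.
Qed.

Definition Epoly (a : nat) : {poly Qq} := \prod_(a <= c < H.+1) (1 - qvar ^+ c *: 'X).

Lemma size_E a b : (size (\prod_(a <= c < b) (1 - qvar ^+ c *: 'X : {poly Qq}))%R <= (b - a).+1)%N.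
Proof. by have := size_prod_lin (index_iota a b) (fun c => qvar ^+ c); rewrite size_iota. Qed.

Lemma Epoly_split a b : (a <= b <= H.+1)%N ->
  Epoly a = \prod_(a <= c < b) (1 - qvar ^+ c *: 'X : {poly Qq}) * Epoly b.
Proof. by case/andP=> ab bH; rewrite /Epoly (big_cat_nat ab bH). Qed.

Lemma bbS x j : conv (1 - qvar ^+ h x *: 'X) (fun m => W m x) j.+1 =
  \sum_(z | (x < z)%O) qvar ^+ h z * W j z.
Proof.
rewrite conv_lin1 WS (bigD1 x) //= addrC addrK; apply: eq_bigl => z.
by rewrite lt_def andbC.
Qed.

Lemma convS (p : {poly Qq}) (a : nat -> Qq) k :
  conv p a k.+1 = p`_k.+1 * a 0%N + \sum_(i < k.+1) p`_i * a (k - i)%N.+1.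
Proof.
rewrite /conv big_ord_recr /= subnn addrC; congr (_ + _); apply: eq_bigr => i _.
by rewrite subSn // -ltnS.
Qed.

Lemma claim x k : (H - h x < k)%N -> conv (Epoly (h x)) (fun m => W m x) k = 0.
Proof.
move: x k; suff: forall n x, (H - h x < n)%N -> forall k, (H - h x < k)%N -> conv (Epoly (h x)) (fun m => W m x) k = 0.
  by move=> P x; apply: P (ltnSn _).
elim=> [//|n IH] x xn [//|k] xk.
have hxH := h_le_H x.
rewrite /Epoly big_ltn ?ltnS // mulrC convM.
rewrite convS [X in X * _]nth_default; last first.
  by apply: leq_trans (size_E _ _) _; lia.
rewrite [0 * _]mul0r [0 + _]add0r.
rewrite (eq_bigr (fun i : 'I_k.+1 => \sum_(z | (x < z)%O) qvar ^+ h z *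
     ((\prod_((h x).+1 <= c < H.+1) (1 - qvar ^+ c *: 'X))`_i * W (k - i) z))); last first.
  move=> i _; rewrite bbS mulr_sumr; apply: eq_bigr => z _.
  by rewrite mulrCA.
rewrite exchange_big /=; apply: big1 => z xz.
rewrite -mulr_sumr; apply/eqP; rewrite mulf_eq0; apply/orP; right; apply/eqP.
have hxz := h_strict xz; have hzH := h_le_H z.
change (conv (Epoly (h x).+1) (fun m => W m z) k = 0).
rewrite (@Epoly_split _ (h z)); last by rewrite hxz (leq_trans hzH).
rewrite convM; apply: (@conv_vanish _ _ (h z - (h x).+1) (H - h z)).
- exact: size_E.
- by move=> j zj; apply: IH => //; lia.
- lia.
Qed.

Definition intq (x : Qq) := exists p : {poly int}, x = tofrac p.

Lemma intq_add x y : intq x -> intq y -> intq (x + y).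
Proof. by move=> [p ->] [q ->]; exists (p + q); rewrite rmorphD. Qed.
Lemma intq_mul x y : intq x -> intq y -> intq (x * y).
Proof. by move=> [p ->] [q ->]; exists (p * q); rewrite rmorphM. Qed.
Lemma intq_opp x : intq x -> intq (- x).
Proof. by move=> [p ->]; exists (- p); rewrite rmorphN. Qed.
Lemma intq0 : intq 0.
Proof. by exists 0; rewrite rmorph0. Qed.
Lemma intq_sum (I : finType) (P : pred I) (F : I -> Qq) :
  (forall i, P i -> intq (F i)) -> intq (\sum_(i | P i) F i).
Proof. by move=> HF; apply: big_ind => //; [exact: intq0 | exact: intq_add]. Qed.
Lemma intq_qX n : intq (qvar ^+ n).
Proof. by exists 'X^n; rewrite qvarX. Qed.
Lemma intq_sign n : intq ((-1) ^+ n).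
Proof. by exists ((-1) ^+ n); rewrite rmorphXn rmorphN rmorph1. Qed.

Lemma intq_map (P : {poly {poly int}}) i : intq ((map_poly (@tofrac _) P : {poly Qq})`_i).
Proof. by exists P`_i; rewrite coef_map_id0 // rmorph0. Qed.

Lemma qdenom_coef H' i : intq ((qdenom H')`_i).
Proof.
have -> : qdenom H' = (map_poly (@tofrac _) (\prod_(i < H'.+1) (1 - 'X^i *: 'X) : {poly {poly int}}) : {poly Qq}).
  rewrite rmorph_prod /qdenom; apply: eq_bigr => j _.
  rewrite rmorphB rmorph1; congr (_ - _); rewrite -!mul_polyC rmorphM /= map_polyC map_polyX /= qvarX. reflexivity.
exact: intq_map.
Qed.

Lemma lead_prod n : (\prod_(0 <= i < n) (1 - qvar ^+ i *: 'X : {poly Qq}))`_n =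
   (-1) ^+ n * qvar ^+ (\sum_(0 <= i < n) i)%N.
Proof.
elim: n => [|n IH]; first by rewrite !big_geq // coef1 expr0 mul1r.
rewrite !big_nat_recr //= mulrBr mulr1 coefB -scalerAr coefZ coefMX /= IH.
rewrite nth_default; last by apply: leq_trans (size_E _ _) _; rewrite subn0.
by rewrite exprS exprD sub0r; ring.
Qed.

Section Main.
Variables (Z : {poly Qq}) (hZ : is_qZeta h Z).
Let s := fun n => Z.[qnum n.+1].
Let D := qdenom H.

Lemma D_Epoly : D = Epoly 0.
Proof. by rewrite /D /qdenom /Epoly big_mkord. Qed.

Lemma size_D : (size D <= H.+2)%N.
Proof. by rewrite D_Epoly; apply: leq_trans (size_E _ _) _; rewrite subn0. Qed.

Lemma sS n : s n.+1 = \sum_x qvar ^+ h x * W n x.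
Proof. by rewrite /s (hZ (n := n.+2)) // multichainS. Qed.

Lemma vanish_big k : (H.+2 <= k)%N -> conv D s k = 0.
Proof.
case: k => [//|k] Hk.
rewrite convS [X in X * _]nth_default; last by apply: leq_trans size_D _.
rewrite [0 * _]mul0r [0 + _]add0r.
rewrite (eq_bigr (fun i : 'I_k.+1 => \sum_x qvar ^+ h x * (D`_i * W (k - i) x))); last first.
  by move=> i _; rewrite sS mulr_sumr; apply: eq_bigr => x _; rewrite mulrCA.
rewrite exchange_big /=; apply: big1 => x _.
rewrite -mulr_sumr; apply/eqP; rewrite mulf_eq0; apply/orP; right; apply/eqP.
have hxH := h_le_H x.
change (conv D (fun m => W m x) k = 0).
rewrite D_Epoly (@Epoly_split _ (h x)); last by rewrite leq0n /= (leq_trans hxH).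
rewrite convM; apply: (@conv_vanish _ _ (h x - 0) (H - h x)).
- exact: size_E.
- by move=> j zj; apply: claim.
- lia.
Qed.

Definition PL : {poly Qq} :=
  \sum_(i < H.+2) D`_i *: (Z \Po (qvar ^+ (H.+1 - i) *: 'X + (qnum (H.+1 - i))%:P)).

Lemma PL_eval m : PL.[qnum m.+1] = conv D s (m + H.+1).
Proof.
rewrite (@conv_small _ _ _ H.+2) ?size_D //; last lia.
rewrite /PL horner_sum; apply: eq_bigr => i _.
rewrite hornerZ horner_comp hornerD hornerZ hornerX hornerC -qnumD /s.
by congr (_ * Z.[qnum _]); have := ltn_ord i; lia.
Qed.

Lemma PL0 : PL = 0.
Proof.
apply/eqP; apply: contraT => nz.
have := max_poly_roots nz (rs := [seq qnum j.+2 | j <- iota 0 (size PL)]).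
rewrite size_map size_iota ltnn; apply.
  apply/allP => y /mapP [j _ ->]; rewrite /root.
  by rewrite (PL_eval j.+1) vanish_big //; lia.
by rewrite map_inj_uniq ?iota_uniq // => i j /qnum_inj; case.
Qed.

Lemma vanish k : (H < k)%N -> conv D s k = 0.
Proof.
move=> hk; have [e|ne] := eqVneq k H.+1.
  by rewrite e -(add0n H.+1) -PL_eval PL0 horner0.
by apply: vanish_big; rewrite ltn_neqAle eq_sym ne hk.
Qed.

Let a := (\sum_(0 <= i < H.+1) i)%N.

Lemma intq_W n x : intq (W n x).
Proof. by apply: intq_sum => e _; exact: intq_qX. Qed.

Lemma s_lq n : intq (s n * qvar ^+ a).
Proof.
case: n => [|n]; last first.
  rewrite sS; apply: intq_mul; last exact: intq_qX.
  by apply: intq_sum => x _; apply: intq_mul; [exact: intq_qX | exact: intq_W].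
have := vanish (ltnSn H); rewrite convS.
have -> : D`_H.+1 = (-1) ^+ H.+1 * qvar ^+ a by rewrite D_Epoly /Epoly lead_prod.
move/eqP; rewrite addr_eq0 => /eqP e.
have -> : s 0%N * qvar ^+ a = (-1) ^+ H.+1 * ((-1) ^+ H.+1 * qvar ^+ a * s 0%N).
  by rewrite !mulrA -exprMn mulrNN mulr1 expr1n mul1r mulrC.
rewrite e; apply: intq_mul; first exact: intq_sign.
apply: intq_opp; apply: intq_sum => i _; apply: intq_mul; first exact: qdenom_coef.
rewrite sS.
by apply: intq_sum => x _; apply: intq_mul; [exact: intq_qX | exact: intq_W].
Qed.

Lemma c_lq k : intq (conv D s k * qvar ^+ a).
Proof.
rewrite /conv mulr_suml; apply: intq_sum => i _; rewrite -mulrA.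
by apply: intq_mul; [exact: qdenom_coef | exact: s_lq].
Qed.

Lemma main_sec : exists (a : nat) (Hp : {poly {poly int}}),
    (size Hp <= H.+1)%N /\
    series_eq_frac s (laurent_poly a Hp) D.
Proof.
have ex k : exists p : {poly int}, conv D s k * qvar ^+ a == tofrac p.
  by have [p ->] := c_lq k; exists p.
exists a, (\poly_(k < H.+1) xchoose (ex k)); split; first exact: size_poly.
apply/series_convE => k.
rewrite /laurent_poly coef_map_id0 ?rmorph0 ?mul0r // coef_poly.
case: ltnP => kH; last by rewrite rmorph0 mul0r vanish.
by rewrite -(eqP (xchooseP (ex k))) mulfK // qvarXn_neq0.
Qed.
End Main.
End MC.

Theorem mainTheorem4 (d : Order.disp_t) (T : finPOrderType d) (h : T -> nat)
  (hh : height_fun h) (Z : {poly Qq}) (hZ : is_qZeta h Z) :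
  exists (a : nat) (Hp : {poly {poly int}}),
    (size Hp <= (maxh h).+1)%N /\
    series_eq_frac (fun n => Z.[qnum n.+1]) (laurent_poly a Hp) (qdenom (maxh h)).
Proof. exact: (main_sec hh hZ). Qed.
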